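(* Let $\mathbb K=[-1,1]$ and $H(x,p)=v_+(x)(e^{2p}-1)+v_-(x)(e^{-2p}-1)$, where $v_\pm:[-1,1]\to[0,\infty)$ satisfy: $v_-(-1)=0$, $v_-(x)>0$ for $x\ne-1$, $v_+(1)=0$, $v_+(x)>0$ for $x\ne1$; $v_\pm$ extend to $C^2$ functions on an open set containing $[-1,1]$; $v_+'(1)<0$ and $v_-'(-1)>0$. Then $H$ satisfies Condition (H).
   Context: The Lagrangian is $\mathcal L(x,v)=\sup_{p\in\mathbb R}(pv-H(x,p))\in(-\infty,\infty]$. Condition (H) on $H:[-1,1]\times\mathbb R\to\mathbb R$: $H(x,0)=0$ for all $x$, and (H1) $H$ is $C^2$ with $\partial_p^2H>0$ on $[-1,1]\times\mathbb R$ and is the restriction of a $C^2$ function on $(-1-\epsilon,1+\epsilon)\times\mathbb R$ for some $\epsilon>0$. (H2) for every compact $K\subseteq(-1,1)$ there is $\theta_K:[0,\infty)\to[0,\infty)$ with $\theta_K(r)/r\to\infty$ as $r\to\infty$; for every $M\ge0$ a constant $k_M$ with $\theta_K(r+m)\le k_M(1+\theta_K(r))$ for all $m\in[0,M]$, $r\ge0$; constants $c_K,C_K$ with $\mathcal L(x,v)\ge\theta_K(|v|)-c_K$ and $|\partial_x\mathcal L(x,v)|+|\partial_v\mathcal L(x,v)|\le C_K\theta_K(|v|)$ for all $x\in K,v\in\mathbb R$. (H3) for each compact $K\subseteq(-1,1)$, $\lim_{|p|\to\infty}\inf_{x\in K}H(x,p)/|p|=\infty$; moreover $\lim_{p\to\infty}H(-1,p)/p=\infty$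 and $\lim_{p\to-\infty}H(1,p)/(-p)=\infty$. (H4) $\lim_{x\to-1}\operatorname{argmin}_pH(x,p)=-\infty$ and $\lim_{x\to1}\operatorname{argmin}_pH(x,p)=+\infty$. (H5) there are $(y_n^+,q_n^+)\in(-1,1)\times(0,\infty)$ converging to $(1,+\infty)$ with $\partial_pH(y_n^+,q)\ge0$ for $q\ge q_n^+$ and $-\partial_xH(y,q_n^+)\ge0$ for $y\ge y_n^+$, and $(y_n^-,q_n^-)\in(-1,1)\times(-\infty,0)$ converging to $(-1,-\infty)$ with $\partial_pH(y_n^-,q)\le0$ for $q\le q_n^-$ and $-\partial_xH(y,q_n^-)\le0$ for $y\le y_n^-$. *)

(* Defs.v *)
From Stdlib Require Import Reals Lra Classical ClassicalEpsilon.
Open Scope R_scope.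

Definition cont2_on (U : R -> R -> Prop) (f : R -> R -> R) : Prop :=
  forall x p, U x p -> forall e, 0 < e -> exists d, 0 < d /\
    forall y q, U y q -> Rabs (y - x) < d -> Rabs (q - p) < d ->
      Rabs (f y q - f x p) < e.

Definition C2_on (U : R -> R -> Prop)
  (G Gx Gp Gxx Gxp Gpx Gpp : R -> R -> R) : Prop :=
  (forall x p, U x p ->
     derivable_pt_lim (fun y => G y p) x (Gx x p) /\
     derivable_pt_lim (fun q => G x q) p (Gp x p) /\
     derivable_pt_lim (fun y => Gx y p) x (Gxx x p) /\
     derivable_pt_lim (fun q => Gx x q) p (Gxp x p) /\
     derivable_pt_lim (fun y => Gp y p) x (Gpx x p) /\
     derivable_pt_lim (fun q => Gp x q) p (Gpp x p)) /\
  cont2_on U G /\ cont2_on U Gx /\ cont2_on U Gp /\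
  cont2_on U Gxx /\ cont2_on U Gxp /\ cont2_on U Gpx /\ cont2_on U Gpp.

Definition C2_on1 (U : R -> Prop) (g g1 g2 : R -> R) : Prop :=
  forall x, U x ->
    derivable_pt_lim g x (g1 x) /\ derivable_pt_lim g1 x (g2 x) /\
    continuity_pt g2 x.

Definition lag_set (H : R -> R -> R) (x v : R) : R -> Prop :=
  fun y => exists p, y = p * v - H x p.

Definition lag_finite (H : R -> R -> R) (x v : R) : Prop :=
  exists l, is_lub (lag_set H x v) l.

(* The Lagrangian L(x,v) = sup_p (p v - H(x,p)) (meaningful when finite). *)
Definition Lag (H : R -> R -> R) (x v : R) : R :=
  epsilon (inhabits 0) (fun l => is_lub (lag_set H x v) l).

Definition is_argmin (H : R -> R -> R) (x p : R) : Prop :=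
  forall q, H x p <= H x q.

Definition subset_open_interval (K : R -> Prop) : Prop :=
  forall x, K x -> -1 < x < 1.

(* Condition (H) on H : [-1,1] x R -> R (H given as a total function;
   only its values on [-1,1] x R matter). *)
Definition ConditionH (H : R -> R -> R) : Prop :=
  (forall x, -1 <= x <= 1 -> H x 0 = 0) /\
  exists eps G Gx Gp Gxx Gxp Gpx Gpp,
    0 < eps /\
    C2_on (fun x _ => -1 - eps < x < 1 + eps) G Gx Gp Gxx Gxp Gpx Gpp /\
    (forall x p, -1 <= x <= 1 -> G x p = H x p) /\
    (forall x p, -1 <= x <= 1 -> 0 < Gpp x p) /\
    (forall K : R -> Prop, compact K -> subset_open_interval K ->
      exists theta : R -> R,
        (forall r, 0 <= r -> 0 <= theta r) /\
        (forall M, exists R0, 0 < R0 /\ forall r, R0 < r -> M < theta r / r) /\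
        (forall M, 0 <= M -> exists kM, forall m r, 0 <= m <= M -> 0 <= r ->
            theta (r + m) <= kM * (1 + theta r)) /\
        exists cK CK, forall x v, K x ->
          lag_finite H x v /\
          theta (Rabs v) - cK <= Lag H x v /\
          exists Lx Lv,
            derivable_pt_lim (fun y => Lag H y v) x Lx /\
            derivable_pt_lim (fun w => Lag H x w) v Lv /\
            Rabs Lx + Rabs Lv <= CK * theta (Rabs v)) /\
    (forall K : R -> Prop, compact K -> subset_open_interval K ->
      forall M, exists R0, 0 < R0 /\ forall p, R0 < Rabs p ->
        forall x, K x -> M < H x p / Rabs p) /\
    (forall M, exists R0, 0 < R0 /\ forall p, R0 < p -> M < H (-1) p / p) /\
    (forall M, exists R0, 0 < R0 /\ forall p, p < - R0 -> M < H 1 p / (- p)) /\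
    (forall M, exists d, 0 < d /\ forall x, -1 < x < 1 -> x < -1 + d ->
        (exists p, is_argmin H x p) /\ (forall p, is_argmin H x p -> p < - M)) /\
    (forall M, exists d, 0 < d /\ forall x, -1 < x < 1 -> 1 - d < x ->
        (exists p, is_argmin H x p) /\ (forall p, is_argmin H x p -> M < p)) /\
    (* (H5); partial derivatives are those of the C^2 extension G, which
       agree with (one-sided) partial derivatives of H on [-1,1] x R *)
    (exists yp qp : nat -> R,
        (forall n, -1 < yp n < 1 /\ 0 < qp n) /\
        Un_cv yp 1 /\ cv_infty qp /\
        (forall n q, qp n <= q -> 0 <= Gp (yp n) q) /\
        (forall n y, yp n <= y <= 1 -> 0 <= - Gx y (qp n))) /\
    (exists ym qm : nat -> R,
        (forall n, -1 < ym n < 1 /\ qm n < 0) /\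
        Un_cv ym (-1) /\ cv_infty (fun n => - qm n) /\
        (forall n q, q <= qm n -> Gp (ym n) q <= 0) /\
        (forall n y, -1 <= y <= ym n -> - Gx y (qm n) <= 0)).

Definition Hex (vp vm : R -> R) (x p : R) : R :=
  vp x * (exp (2 * p) - 1) + vm x * (exp (- (2 * p)) - 1).

(* Main.v *)
Require Import Defs.
From Stdlib Require Import Reals Lra Classical ClassicalEpsilon.
From Stdlib Require Import List.
From Coquelicot Require Import Coquelicot.
Open Scope R_scope.

Definition sfun a b v := (v + sqrt (v*v + 16*a*b)) / (4*a).
Definition Lf a b v := ln (sfun a b v) / 2 * v - a*(sfun a b v - 1) - b*(/ sfun a b v - 1).

Lemma sqrt_facts a b v : 0 < a -> 0 < b ->
  let S := sqrt (v*v + 16*a*b) in 0 <= S /\ S * S = v*v + 16*a*b.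
Proof. intros ha hb S. split. apply sqrt_pos. unfold S; apply sqrt_sqrt. nra. Qed.

Lemma sfun_pos a b v : 0 < a -> 0 < b -> 0 < sfun a b v.
Proof.
  intros ha hb. destruct (sqrt_facts a b v ha hb) as [h1 h2].
  unfold sfun. apply Rdiv_lt_0_compat; [|lra]. nra.
Qed.

Lemma sfun_eq a b v : 0 < a -> 0 < b ->
  2*a*sfun a b v*sfun a b v - v*sfun a b v - 2*b = 0.
Proof.
  intros ha hb. destruct (sqrt_facts a b v ha hb) as [h1 h2].
  set (S := sqrt (v * v + 16 * a * b)) in *.
  assert (E : 4*a*sfun a b v = v + S) by (unfold sfun; fold S; field; lra).
  set (s := sfun a b v) in *.
  assert (8*a*(2*a*s*s - v*s - 2*b) = 0) by nra.
  apply Rmult_integral in H. destruct H; [lra|exact H].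
Qed.

Lemma sfun_eq2 a b v : 0 < a -> 0 < b ->
  2*a*sfun a b v - 2*b / sfun a b v = v.
Proof.
  intros ha hb. pose proof (sfun_pos a b v ha hb). pose proof (sfun_eq a b v ha hb).
  set (s := sfun a b v) in *. field_simplify; [|lra].
  apply (Rmult_eq_reg_r s); [|lra]. field_simplify; lra.
Qed.

Lemma Lf_lub a b v : 0 < a -> 0 < b ->
  is_lub (fun y => exists p, y = p * v - (a * (exp (2 * p) - 1) + b * (exp (- (2 * p)) - 1)))
    (Lf a b v).
Proof.
  intros ha hb. pose proof (sfun_pos a b v ha hb) as hs. pose proof (sfun_eq2 a b v ha hb) as he.
  set (s := sfun a b v) in *. set (p0 := ln s / 2).
  assert (E1 : exp (2 * p0) = s) by (unfold p0; replace (2 * (ln s / 2)) with (ln s) by field; apply exp_ln; lra).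
  assert (E2 : exp (- (2 * p0)) = / s) by (rewrite exp_Ropp, E1; reflexivity).
  assert (HL : Lf a b v = p0 * v - (a * (exp (2 * p0) - 1) + b * (exp (- (2 * p0)) - 1))).
  { rewrite E1, E2. unfold Lf, p0. fold s. ring. }
  split.
  - intros y [p ->]. rewrite HL.
    assert (F1 : exp (2*p) = exp (2*p0) * exp (2*(p-p0))) by (rewrite <- exp_plus; f_equal; ring).
    assert (F2 : exp (-(2*p)) = exp (-(2*p0)) * exp (-(2*(p-p0)))) by (rewrite <- exp_plus; f_equal; ring).
    pose proof (exp_ineq1_le (2*(p-p0))). pose proof (exp_ineq1_le (-(2*(p-p0)))).
    rewrite F1, F2, E1, E2.
    assert (hv : v = 2*a*s - 2*b*/s) by (rewrite <- he; unfold Rdiv; ring).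
    assert (0 < / s) by (apply Rinv_0_lt_compat; lra).
    assert (a * s * exp (2 * (p - p0)) >= a*s*(1 + 2*(p-p0))) by (apply Rle_ge, Rmult_le_compat_l; [nra|lra]).
    assert (b * /s * exp (-(2 * (p - p0))) >= b*/s*(1 + -(2*(p-p0)))) by (apply Rle_ge, Rmult_le_compat_l; [nra|lra]).
    rewrite hv. nra.
  - intros b0 Hb. apply Hb. exists p0. exact HL.
Qed.

Lemma Lag_eq vp vm x v : 0 < vp x -> 0 < vm x ->
  lag_finite (Hex vp vm) x v /\ Lag (Hex vp vm) x v = Lf (vp x) (vm x) v.
Proof.
  intros ha hb. pose proof (Lf_lub (vp x) (vm x) v ha hb) as H.
  assert (Hset : lag_set (Hex vp vm) x v = (fun y => exists p, y = p * v - (vp x * (exp (2 * p) - 1) + vm x * (exp (- (2 * p)) - 1)))) by reflexivity.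
  split. exists (Lf (vp x) (vm x) v). rewrite Hset. exact H.
  unfold Lag. apply (is_lub_u (lag_set (Hex vp vm) x v)).
  apply epsilon_spec. exists (Lf (vp x) (vm x) v). exact H. exact H.
Qed.

Lemma Lag_ge vp vm x v p : 0 < vp x -> 0 < vm x ->
  p * v - Hex vp vm x p <= Lag (Hex vp vm) x v.
Proof.
  intros ha hb. destruct (Lag_eq vp vm x v ha hb) as [_ E]. rewrite E.
  apply (proj1 (Lf_lub _ _ v ha hb)). exists p. reflexivity.
Qed.


Lemma env_x (al be sg : R -> R) x v da db ds :
  0 < sg x -> is_derive sg x ds -> is_derive al x da -> is_derive be x db ->
  2*al x*sg x*sg x - v*sg x - 2*be x = 0 ->
  is_derive (fun y => ln (sg y) / 2 * v - al y * (sg y - 1) - be y * (/ sg y - 1)) x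
     (- (da * (sg x - 1)) - db * (/ sg x - 1)).
Proof.
  intros hs Hs Ha Hb Hid.
  assert (Hs' := Hs); assert (Ha' := Ha); assert (Hb' := Hb).
  apply is_derive_unique in Hs', Ha', Hb'.
  auto_derive.
  - repeat split; try (eexists; eassumption); lra.
  - replace (Derive (fun x0 => sg x0) x) with ds by (symmetry; exact Hs').
    replace (Derive (fun x0 => al x0) x) with da by (symmetry; exact Ha').
    replace (Derive (fun x0 => be x0) x) with db by (symmetry; exact Hb').
    apply Rminus_diag_uniq.
    transitivity (- ds * (2*al x*sg x*sg x - v*sg x - 2*be x) / (2*sg x*sg x)).
    + field; lra.
    + rewrite Hid; field; lra.
Qed.

Lemma env_v (sg : R -> R) a b v ds :
  0 < sg v -> is_derive sg v ds ->
  2*a*sg v*sg v - v*sg v - 2*b = 0 ->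
  is_derive (fun w => ln (sg w) / 2 * w - a * (sg w - 1) - b * (/ sg w - 1)) v
     (ln (sg v) / 2).
Proof.
  intros hs Hs Hid.
  assert (Hs' := Hs). apply is_derive_unique in Hs'.
  auto_derive.
  - repeat split; try (eexists; eassumption); lra.
  - replace (Derive (fun x0 => sg x0) v) with ds by (symmetry; exact Hs').
    apply Rminus_diag_uniq.
    transitivity (- ds * (2*a*sg v*sg v - v*sg v - 2*b) / (2*sg v*sg v)).
    + field; lra.
    + rewrite Hid; field; lra.
Qed.

Lemma Lf_der_x (al be : R -> R) x v da db :
  0 < al x -> 0 < be x -> is_derive al x da -> is_derive be x db ->
  is_derive (fun y => Lf (al y) (be y) v) x
   (- (da * (sfun (al x) (be x) v - 1)) - db * (/ sfun (al x) (be x) v - 1)).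
Proof.
  intros ha hb Ha Hb.
  assert (Ex : ex_derive (fun y => sfun (al y) (be y) v) x).
  { unfold sfun. auto_derive. repeat split; try (eexists; eassumption); nra. }
  destruct Ex as [ds Hds].
  unfold Lf.
  apply (env_x al be (fun y => sfun (al y) (be y) v) x v da db ds); auto.
  apply sfun_pos; auto. apply sfun_eq; auto.
Qed.

Lemma Lf_der_v a b v : 0 < a -> 0 < b ->
  is_derive (fun w => Lf a b w) v (ln (sfun a b v) / 2).
Proof.
  intros ha hb.
  assert (Ex : ex_derive (fun w => sfun a b w) v).
  { unfold sfun. auto_derive. repeat split; nra. }
  destruct Ex as [ds Hds].
  unfold Lf.
  apply (env_v (fun w => sfun a b w) a b v ds); auto.
  apply sfun_pos; auto. apply sfun_eq; auto.
Qed.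


Lemma list_pos_min (l : list R) : (forall t, In t l -> 0 < t) ->
  exists e, 0 < e /\ forall t, In t l -> e <= t.
Proof.
  induction l as [|a l IH]; intros H.
  - exists 1. split. lra. intros t [].
  - destruct IH as [e [he He]]. intros t Ht; apply H; right; exact Ht.
    exists (Rmin a e). split. apply Rmin_pos; auto. apply H; left; auto.
    intros t [<-|Ht]. apply Rmin_l. eapply Rle_trans. apply Rmin_r. apply He, Ht.
Qed.

Lemma compact_in_interval (K : R -> Prop) : compact K -> subset_open_interval K ->
  exists c d, -1 < c /\ c <= d /\ d < 1 /\ forall x, K x -> c <= x <= d.
Proof.
  intros HK Hsub.
  set (fam := fun t x => (0 < t < 1) /\ -1 + t < x < 1 - t).
  assert (cf : forall t, (exists y, fam t y) -> (fun t => 0 < t < 1) t).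
  { intros t [y [h _]]. exact h. }
  set (F := mkfamily (fun t => 0 < t < 1) fam cf).
  assert (Hcov : covering_open_set K F).
  { split.
    - intros x Kx. destruct (Hsub x Kx) as [h1 h2].
      exists ((1 - Rabs x)/2). simpl. unfold fam.
      destruct (Rcase_abs x); [rewrite Rabs_left by lra|rewrite Rabs_right by lra]; lra.
    - intros t z [ht hz]. simpl in *.
      assert (hd : 0 < Rmin (z - (-1 + t)) ((1 - t) - z)) by (apply Rmin_pos; lra).
      exists (mkposreal _ hd). intros y Hy. unfold disc in Hy; simpl in Hy.
      pose proof (Rmin_l (z - (-1 + t)) ((1 - t) - z)). pose proof (Rmin_r (z - (-1 + t)) ((1 - t) - z)).
      apply Rabs_def2 in Hy. unfold fam. lra. }
  destruct (HK F Hcov) as [D [Hc [l Hl]]].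
  destruct (list_pos_min l) as [e [he He]].
  { intros t Ht. apply Hl in Ht. destruct Ht as [Ht _]. simpl in Ht. lra. }
  set (e' := Rmin e (1/2)).
  assert (he' : 0 < e') by (apply Rmin_pos; lra).
  assert (e'1 : e' <= 1/2) by apply Rmin_r.
  exists (-1 + e'), (1 - e'). split; [lra|split; [lra|split; [lra|]]].
  intros x Kx. destruct (Hc x Kx) as [t [[ht hx] Dt]]. simpl in *.
  assert (Hin : In t l) by (apply Hl; split; auto; destruct ht; auto).
  pose proof (He t Hin). pose proof (Rmin_l e (1/2)). unfold fam in ht. unfold e' in *. lra.
Qed.

Lemma cont_abs_bound (f : R -> R) a b : a <= b ->
  (forall c, a <= c <= b -> continuity_pt f c) ->
  exists B, 0 <= B /\ forall x, a <= x <= b -> Rabs (f x) <= B.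
Proof.
  intros hab Hc.
  destruct (continuity_ab_maj f a b hab Hc) as [M1 [HM1 _]].
  destruct (continuity_ab_min f a b hab Hc) as [M2 [HM2 _]].
  exists (Rabs (f M1) + Rabs (f M2)). split. pose proof (Rabs_pos (f M1)); pose proof (Rabs_pos (f M2)); lra.
  intros x hx. specialize (HM1 x hx). specialize (HM2 x hx).
  unfold Rabs; repeat destruct Rcase_abs; lra.
Qed.

Lemma cont_pos_bound (f : R -> R) a b : a <= b ->
  (forall c, a <= c <= b -> continuity_pt f c) ->
  (forall c, a <= c <= b -> 0 < f c) ->
  exists d, 0 < d /\ forall x, a <= x <= b -> d <= f x.
Proof.
  intros hab Hc Hp.
  destruct (continuity_ab_min f a b hab Hc) as [m [Hm hm]].
  exists (f m). split. apply Hp, hm. exact Hm.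
Qed.

Lemma ln_le_sub1 y : 0 < y -> ln y <= y - 1.
Proof. intros hy. pose proof (exp_ineq1_le (ln y)). rewrite exp_ln in H; lra. Qed.

Lemma ln_abs_bound y : 0 < y -> Rabs (ln y) <= y + / y.
Proof.
  intros hy. pose proof (ln_le_sub1 y hy). assert (0 < /y) by (apply Rinv_0_lt_compat; lra).
  pose proof (ln_le_sub1 (/y) H0). rewrite ln_Rinv in H1 by lra.
  unfold Rabs; destruct Rcase_abs; lra.
Qed.

Definition theta (r : R) := 1 + r + r * ln (1 + r) / 4.

Lemma ln1p_nonneg r : 0 <= r -> 0 <= ln (1 + r).
Proof. intros h. rewrite <- ln_1. apply ln_le; lra. Qed.

Lemma theta_nonneg r : 0 <= r -> 0 <= theta r.
Proof. intros h. unfold theta. pose proof (ln1p_nonneg r h). nra. Qed.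

Lemma theta_ge r : 0 <= r -> 1 + r <= theta r.
Proof. intros h. unfold theta. pose proof (ln1p_nonneg r h). nra. Qed.

Lemma theta_super M : exists R0, 0 < R0 /\ forall r, R0 < r -> M < theta r / r.
Proof.
  exists (exp (4 * Rabs M)). split. apply exp_pos.
  intros r hr. pose proof (exp_pos (4 * Rabs M)).
  assert (hl : 4 * Rabs M < ln (1 + r)).
  { rewrite <- (ln_exp (4 * Rabs M)). apply ln_increasing; lra. }
  apply Rmult_lt_reg_r with r. lra. unfold Rdiv. rewrite Rmult_assoc, Rinv_l, Rmult_1_r by lra.
  unfold theta. pose proof (Rle_abs M). nra.
Qed.

Lemma ln_shift r m : 0 <= r -> 0 <= m -> ln (1 + (r + m)) <= ln (1 + r) + m.
Proof.
  intros hr hm. rewrite <- (ln_exp m) at 2. rewrite <- ln_mult by (try apply exp_pos; lra).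
  apply ln_le. lra. pose proof (exp_ineq1_le m). nra.
Qed.

Lemma theta_doubling M : 0 <= M -> exists kM, forall m r, 0 <= m <= M -> 0 <= r ->
  theta (r + m) <= kM * (1 + theta r).
Proof.
  intros hM. exists (2 + M + M*M). intros m r [hm0 hm] hr.
  pose proof (ln_shift r m hr hm0). pose proof (ln1p_nonneg r hr). pose proof (ln1p_nonneg (r+m) ltac:(lra)).
  assert (hl : ln (1 + r) <= r) by (pose proof (ln_le_sub1 (1 + r)); lra).
  unfold theta. set (l := ln (1 + r)) in *. set (l' := ln (1 + (r + m))) in *.
  assert ((r + m) * l' <= (r + M) * (l + M)) by (apply Rmult_le_compat; lra).
  assert (0 <= r * l) by nra. assert (0 <= M * r) by nra. assert (M * l <= M * r) by nra.
  assert (0 <= M * (r * l)) by nra. assert (0 <= (M * M) * r) by nra. assert (0 <= (M*M) * (r * l)) by nra.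
  assert (0 <= M * M) by nra.
  assert (E : (2 + M + M*M) * (1 + (1 + r + r * l / 4)) = 4 + 2*r + r*l/2 + 2*M + M*r + M*(r*l)/4 + 2*(M*M) + (M*M)*r + (M*M)*(r*l)/4) by field.
  rewrite E. nra.
Qed.


Lemma sfun_bounds a b v d A : 0 < d -> d <= a <= A -> d <= b <= A ->
  sfun a b v <= Rabs v / (2*d) + A / d /\ / sfun a b v <= Rabs v / (2*d) + A / d.
Proof.
  intros hd ha hb. assert (ha0 : 0 < a) by lra. assert (hb0 : 0 < b) by lra.
  destruct (sqrt_facts a b v ha0 hb0) as [h1 h2].
  set (S := sqrt (v * v + 16 * a * b)) in *.
  pose proof (Rle_abs v). pose proof (Rle_abs (-v)). rewrite Rabs_Ropp in H0.
  assert (hS : S <= Rabs v + 4 * A).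
  { assert (Rabs v * Rabs v = v * v) by (rewrite <- Rabs_mult; apply Rabs_right; nra).
    pose proof (Rabs_pos v). nra. }
  assert (hpos : 0 < v + S) by nra.
  assert (Q : (2 * Rabs v + 4 * A) / (4 * d) = Rabs v / (2*d) + A / d) by (field; lra).
  split.
  - unfold sfun. fold S. rewrite <- Q.
    unfold Rdiv. apply Rle_trans with ((2 * Rabs v + 4 * A) * / (4 * a)).
    apply Rmult_le_compat_r. left; apply Rinv_0_lt_compat; lra. lra.
    apply Rmult_le_compat_l. pose proof (Rabs_pos v); lra.
    apply Rinv_le_contravar; lra.
  - assert (E : / sfun a b v = (S - v) / (4 * b)).
    { assert (hs : 0 < sfun a b v) by (apply sfun_pos; lra).
      apply (Rmult_eq_reg_r (sfun a b v)); [|lra]. rewrite Rinv_l by lra.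
      unfold sfun. fold S. field_simplify; try lra.
      replace (S ^ 2 - v ^ 2) with (16 * b * a) by nra. field; lra. }
    rewrite E, <- Q. unfold Rdiv. apply Rle_trans with ((2 * Rabs v + 4 * A) * / (4 * b)).
    apply Rmult_le_compat_r. left; apply Rinv_0_lt_compat; lra. lra.
    apply Rmult_le_compat_l. pose proof (Rabs_pos v); lra.
    apply Rinv_le_contravar; lra.
Qed.

Lemma deriv_bound a b v d A D da db : 0 < d -> d <= a <= A -> d <= b <= A -> 0 <= D ->
  Rabs da <= D -> Rabs db <= D ->
  Rabs (- (da * (sfun a b v - 1)) - db * (/ sfun a b v - 1)) + Rabs (ln (sfun a b v) / 2)
  <= ((2*D+1) * (1/(2*d) + A/d) + 2*D) * theta (Rabs v).
Proof.
  intros hd ha hb hD Ha Hb.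
  assert (hs : 0 < sfun a b v) by (apply sfun_pos; lra).
  destruct (sfun_bounds a b v d A hd ha hb) as [h1 h2].
  assert (hsi : 0 < / sfun a b v) by (apply Rinv_0_lt_compat; lra).
  set (s := sfun a b v) in *. set (Q := Rabs v / (2 * d) + A / d) in *.
  pose proof (ln_abs_bound s hs).
  assert (hv : 0 <= Rabs v) by apply Rabs_pos.
  pose proof (theta_ge (Rabs v) hv).
  assert (hQ : Q <= (1/(2*d) + A/d) * (1 + Rabs v)).
  { assert (0 <= A) by lra. assert (0 < /d) by (apply Rinv_0_lt_compat; lra).
    assert (E1 : Q = (Rabs v / 2 + A) * / d) by (unfold Q; field; lra).
    assert (E2 : (1/(2*d) + A/d) * (1 + Rabs v) = (1/2 + A) * (1 + Rabs v) * / d) by (field; lra).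
    rewrite E1, E2. apply Rmult_le_compat_r; nra. }
  assert (e1 : Rabs (- (da * (s - 1)) - db * (/ s - 1)) <= D * (Q + 1) + D * (Q + 1)).
  { eapply Rle_trans. apply Rabs_triang. rewrite Rabs_Ropp, Rabs_Ropp, !Rabs_mult.
    apply Rplus_le_compat; apply Rmult_le_compat; try apply Rabs_pos; auto;
    unfold Rabs; destruct Rcase_abs; lra. }
  assert (e2 : Rabs (ln s / 2) <= Q).
  { unfold Rdiv. rewrite Rabs_mult, (Rabs_right (/2)) by lra. lra. }
  assert (0 <= 1/(2*d) + A/d).
  { assert (0 < /d) by (apply Rinv_0_lt_compat; lra).
    replace (1/(2*d) + A/d) with ((1/2 + A) * / d) by (field; lra). nra. }
  set (C1 := 1/(2*d) + A/d) in *. set (T := theta (Rabs v)) in *.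
  assert (Q <= C1 * T) by nra.
  nra.
Qed.

Lemma Lag_lower vp vm x v A : 0 < vp x -> 0 < vm x -> vp x <= A -> vm x <= A ->
  theta (Rabs v) - (1 + (A + 1) * exp (4 * (A + 1))) <= Lag (Hex vp vm) x v.
Proof.
  intros ha hb hA hB.
  set (r := Rabs v). assert (hr : 0 <= r) by apply Rabs_pos.
  set (l := ln (1 + r)).
  assert (hl : 0 <= l) by (apply ln1p_nonneg; auto).
  assert (key : r * l / 2 - A * r <= Lag (Hex vp vm) x v).
  { destruct (Rcase_abs v) as [hv|hv].
    - assert (r = - v) by (unfold r; rewrite Rabs_left; lra).
      eapply Rle_trans; [|apply (Lag_ge vp vm x v (- (l / 2))); auto].
      unfold Hex.
      assert (E1 : exp (2 * (- (l/2))) = / (1 + r)).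
      { replace (2 * (- (l/2))) with (- l) by field. rewrite exp_Ropp. unfold l. rewrite exp_ln by lra. reflexivity. }
      assert (E2 : exp (- (2 * (- (l/2)))) = 1 + r).
      { replace (- (2 * (- (l/2)))) with l by field. unfold l. rewrite exp_ln by lra. reflexivity. }
      rewrite E1, E2.
      assert (0 < / (1 + r) <= 1).
      { split. apply Rinv_0_lt_compat; lra. rewrite <- Rinv_1. apply Rinv_le_contravar; lra. }
      assert (vp x * (/ (1 + r) - 1) <= 0) by nra.
      nra.
    - assert (r = v) by (unfold r; rewrite Rabs_right; lra).
      eapply Rle_trans; [|apply (Lag_ge vp vm x v (l / 2)); auto].
      unfold Hex.
      assert (E1 : exp (2 * (l/2)) = 1 + r).
      { replace (2 * (l/2)) with l by field. unfold l. rewrite exp_ln by lra. reflexivity. }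
      assert (E2 : exp (- (2 * (l/2))) = / (1 + r)).
      { replace (- (2 * (l/2))) with (- l) by field. rewrite exp_Ropp. unfold l. rewrite exp_ln by lra. reflexivity. }
      rewrite E1, E2.
      assert (0 < / (1 + r) <= 1).
      { split. apply Rinv_0_lt_compat; lra. rewrite <- Rinv_1. apply Rinv_le_contravar; lra. }
      assert (vm x * (/ (1 + r) - 1) <= 0) by nra.
      nra. }
  unfold theta. fold r. fold l.
  assert (hAr : 0 <= A) by lra.
  pose proof (exp_pos (4 * (A + 1))).
  destruct (Rle_dec (4 * (A + 1)) l) as [h|h].
  - assert (r * (4 * (A+1)) <= r * l) by (apply Rmult_le_compat_l; lra).
    nra.
  - assert (hr2 : 1 + r < exp (4 * (A + 1))).
    { apply Rnot_le_lt in h. unfold l in h. apply ln_lt_inv; try lra. rewrite ln_exp. exact h. }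
    assert (0 <= r * l) by nra.
    assert ((A + 1) * r <= (A + 1) * exp (4 * (A + 1))) by (apply Rmult_le_compat_l; lra).
    nra.
Qed.


Lemma cont2_gen (al be e1 e2 : R -> R) (U : R -> R -> Prop) :
 (forall x p, U x p -> continuity_pt al x /\ continuity_pt be x) ->
 (forall p, continuity_pt e1 p /\ continuity_pt e2 p) ->
 cont2_on U (fun x p => al x * e1 p + be x * e2 p).
Proof.
  intros Hx Hp x p Uxp e he.
  destruct (Hx x p Uxp) as [ca cb]. destruct (Hp p) as [c1 c2].
  apply continuity_pt_filterlim in ca, cb, c1, c2.
  assert (C : continuous (fun z : R * R => plus (mult (al (fst z)) (e1 (snd z))) (mult (be (fst z)) (e2 (snd z)))) (x, p)).
  { apply (continuous_plus (K:=R_AbsRing) (V := R_NormedModule)); apply (continuous_mult (K:=R_AbsRing));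
      (apply continuous_comp; [first [apply continuous_fst | apply continuous_snd] | simpl; assumption]). }
  apply filterlim_locally with (eps := mkposreal e he) in C.
  destruct C as [d Hd].
  exists d. split. apply cond_pos.
  intros y q _ hy hq.
  specialize (Hd (y, q) (conj hy hq)). exact Hd.
Qed.

Lemma D1 (al be : R -> R) x da db c1 c2 :
  derivable_pt_lim al x da -> derivable_pt_lim be x db ->
  derivable_pt_lim (fun y => al y * c1 + be y * c2) x (da * c1 + db * c2).
Proof.
  intros Ha Hb. apply is_derive_Reals in Ha, Hb. apply is_derive_Reals.
  assert (Ha' := Ha); assert (Hb' := Hb). apply is_derive_unique in Ha', Hb'.
  auto_derive. repeat split; eexists; eassumption.
  change (Derive (fun x0 => al x0) x) with (Derive al x). change (Derive (fun x0 => be x0) x) with (Derive be x).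
  rewrite Ha', Hb'. ring.
Qed.

Lemma D2 (e1 e2 : R -> R) p d1 d2 a b :
  derivable_pt_lim e1 p d1 -> derivable_pt_lim e2 p d2 ->
  derivable_pt_lim (fun q => a * e1 q + b * e2 q) p (a * d1 + b * d2).
Proof.
  intros Ha Hb. apply is_derive_Reals in Ha, Hb. apply is_derive_Reals.
  assert (Ha' := Ha); assert (Hb' := Hb). apply is_derive_unique in Ha', Hb'.
  auto_derive. repeat split; eexists; eassumption.
  change (Derive (fun x0 => e1 x0) p) with (Derive e1 p). change (Derive (fun x0 => e2 x0) p) with (Derive e2 p).
  rewrite Ha', Hb'. ring.
Qed.

Lemma de1 p : derivable_pt_lim (fun q => exp (2 * q) - 1) p (2 * exp (2 * p)).
Proof. apply is_derive_Reals. auto_derive. auto. ring. Qed.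
Lemma de1' p : derivable_pt_lim (fun q => 2 * exp (2 * q)) p (4 * exp (2 * p)).
Proof. apply is_derive_Reals. auto_derive. auto. ring. Qed.
Lemma de2 p : derivable_pt_lim (fun q => exp (- (2 * q)) - 1) p (-2 * exp (- (2 * p))).
Proof. apply is_derive_Reals. auto_derive. auto. ring. Qed.
Lemma de2' p : derivable_pt_lim (fun q => -2 * exp (- (2 * q))) p (4 * exp (- (2 * p))).
Proof. apply is_derive_Reals. auto_derive. auto. ring. Qed.

Lemma ce1 p : continuity_pt (fun q => exp (2 * q) - 1) p.
Proof. apply derivable_continuous_pt. exists (2 * exp (2 * p)). apply de1. Qed.
Lemma ce1' p : continuity_pt (fun q => 2 * exp (2 * q)) p.
Proof. apply derivable_continuous_pt. exists (4 * exp (2 * p)). apply de1'. Qed.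
Lemma ce1'' p : continuity_pt (fun q => 4 * exp (2 * q)) p.
Proof. apply derivable_continuous_pt. exists (8 * exp (2 * p)). apply is_derive_Reals. auto_derive. auto. ring. Qed.
Lemma ce2 p : continuity_pt (fun q => exp (- (2 * q)) - 1) p.
Proof. apply derivable_continuous_pt. exists (-2 * exp (- (2 * p))). apply de2. Qed.
Lemma ce2' p : continuity_pt (fun q => -2 * exp (- (2 * q))) p.
Proof. apply derivable_continuous_pt. exists (4 * exp (- (2 * p))). apply de2'. Qed.
Lemma ce2'' p : continuity_pt (fun q => 4 * exp (- (2 * q))) p.
Proof. apply derivable_continuous_pt. exists (-8 * exp (- (2 * p))). apply is_derive_Reals. auto_derive. auto. ring. Qed.

Lemma C2_on1_facts U g g1 g2 x : C2_on1 U g g1 g2 -> U x ->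
  continuity_pt g x /\ continuity_pt g1 x /\ continuity_pt g2 x.
Proof.
  intros H Ux. destruct (H x Ux) as [h1 [h2 h3]]. split; [|split]; auto.
  apply derivable_continuous_pt. exists (g1 x). exact h1.
  apply derivable_continuous_pt. exists (g2 x). exact h2.
Qed.

Lemma open_strip (U : R -> Prop) : open_set U -> (forall x, -1 <= x <= 1 -> U x) ->
  exists e, 0 < e /\ forall x, -1 - e < x < 1 + e -> U x.
Proof.
  intros HU Hin.
  destruct (HU (-1) (Hin (-1) ltac:(lra))) as [d1 H1].
  destruct (HU 1 (Hin 1 ltac:(lra))) as [d2 H2].
  exists (Rmin d1 d2). split. apply Rmin_pos; apply cond_pos.
  intros x hx. pose proof (Rmin_l d1 d2). pose proof (Rmin_r d1 d2).
  destruct (Rle_dec x (-1)).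
  - apply H1. unfold disc. rewrite Rabs_left1; lra.
  - destruct (Rle_dec x 1). apply Hin; lra.
    apply H2. unfold disc. rewrite Rabs_right; lra.
Qed.


Lemma part_H2 (vp vm gp gm gp1 gm1 : R -> R)
  (hvm_pos : forall x, -1 <= x <= 1 -> x <> -1 -> 0 < vm x)
  (hvp_pos : forall x, -1 <= x <= 1 -> x <> 1 -> 0 < vp x)
  (eqp : forall x, -1 <= x <= 1 -> gp x = vp x)
  (eqm : forall x, -1 <= x <= 1 -> gm x = vm x)
  (cont : forall x, -1 <= x <= 1 -> continuity_pt gp x /\ continuity_pt gm x /\
            continuity_pt gp1 x /\ continuity_pt gm1 x)
  (dp : forall x, -1 <= x <= 1 -> derivable_pt_lim gp x (gp1 x))
  (dm : forall x, -1 <= x <= 1 -> derivable_pt_lim gm x (gm1 x)) :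
  forall K : R -> Prop, compact K -> subset_open_interval K ->
      exists theta : R -> R,
        (forall r, 0 <= r -> 0 <= theta r) /\
        (forall M, exists R0, 0 < R0 /\ forall r, R0 < r -> M < theta r / r) /\
        (forall M, 0 <= M -> exists kM, forall m r, 0 <= m <= M -> 0 <= r ->
            theta (r + m) <= kM * (1 + theta r)) /\
        exists cK CK, forall x v, K x ->
          lag_finite (Hex vp vm) x v /\
          theta (Rabs v) - cK <= Lag (Hex vp vm) x v /\
          exists Lx Lv,
            derivable_pt_lim (fun y => Lag (Hex vp vm) y v) x Lx /\
            derivable_pt_lim (fun w => Lag (Hex vp vm) x w) v Lv /\
            Rabs Lx + Rabs Lv <= CK * theta (Rabs v).
Proof.
  intros K HK Hsub.
  destruct (compact_in_interval K HK Hsub) as [c [d [hc [hcd [hd Hcd]]]]].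
  destruct (cont_pos_bound gp c d hcd) as [dp0 [hdp Hdp]].
  { intros; apply cont; lra. }
  { intros y hy. rewrite eqp by lra. apply hvp_pos; lra. }
  destruct (cont_pos_bound gm c d hcd) as [dm0 [hdm Hdm]].
  { intros; apply cont; lra. }
  { intros y hy. rewrite eqm by lra. apply hvm_pos; lra. }
  destruct (cont_abs_bound gp (-1) 1 ltac:(lra)) as [Bp [hBp HBp]]. { intros; apply cont; lra. }
  destruct (cont_abs_bound gm (-1) 1 ltac:(lra)) as [Bm [hBm HBm]]. { intros; apply cont; lra. }
  destruct (cont_abs_bound gp1 (-1) 1 ltac:(lra)) as [Dp [hDp HDp]]. { intros; apply cont; lra. }
  destruct (cont_abs_bound gm1 (-1) 1 ltac:(lra)) as [Dm [hDm HDm]]. { intros; apply cont; lra. }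
  set (del := Rmin dp0 dm0). set (A := Bp + Bm). set (Dd := Dp + Dm).
  assert (hdel : 0 < del) by (apply Rmin_pos; auto).
  assert (hdel1 : del <= dp0) by apply Rmin_l. assert (hdel2 : del <= dm0) by apply Rmin_r.
  exists theta. split; [exact theta_nonneg|]. split; [exact theta_super|]. split; [exact theta_doubling|].
  exists (1 + (A + 1) * exp (4 * (A + 1))), ((2*Dd+1) * (1/(2*del) + A/del) + 2*Dd).
  intros x v Kx.
  pose proof (Hcd x Kx) as hx. pose proof (Hsub x Kx) as hx'.
  assert (hx1 : -1 <= x <= 1) by lra.
  assert (ha : del <= vp x <= A).
  { rewrite <- eqp by lra. split. specialize (Hdp x hx); lra.
    specialize (HBp x hx1). pose proof (Rle_abs (gp x)). unfold A; lra. }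
  assert (hb : del <= vm x <= A).
  { rewrite <- eqm by lra. split. specialize (Hdm x hx); lra.
    specialize (HBm x hx1). pose proof (Rle_abs (gm x)). unfold A; lra. }
  assert (ha0 : 0 < vp x) by lra. assert (hb0 : 0 < vm x) by lra.
  destruct (Lag_eq vp vm x v ha0 hb0) as [Hfin HL].
  split; [exact Hfin|].
  split; [apply Lag_lower; auto; lra|].
  set (s := sfun (vp x) (vm x) v).
  exists (- (gp1 x * (s - 1)) - gm1 x * (/ s - 1)), (ln s / 2).
  split; [|split].
  - apply is_derive_Reals.
    apply (is_derive_ext_loc (fun y => Lf (gp y) (gm y) v)).
    + assert (hde : 0 < Rmin (x + 1) (1 - x)) by (apply Rmin_pos; lra).
      exists (mkposreal _ hde). intros y hy. change (Rabs (y - x) < Rmin (x + 1) (1 - x)) in hy.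
      pose proof (Rmin_l (x + 1) (1 - x)). pose proof (Rmin_r (x + 1) (1 - x)).
      apply Rabs_def2 in hy.
      assert (hy1 : -1 <= y <= 1) by lra.
      rewrite eqp, eqm by lra. symmetry. apply Lag_eq; [apply hvp_pos|apply hvm_pos]; lra.
    + unfold s. rewrite <- (eqp x), <- (eqm x) by lra. apply Lf_der_x.
      rewrite eqp by lra; lra. rewrite eqm by lra; lra.
      apply is_derive_Reals, dp; lra. apply is_derive_Reals, dm; lra.
  - apply is_derive_Reals.
    apply (is_derive_ext (fun w => Lf (vp x) (vm x) w)).
    + intros w. symmetry. apply Lag_eq; auto.
    + apply Lf_der_v; auto.
  - apply (deriv_bound (vp x) (vm x) v del A Dd); auto.
    unfold Dd; lra.
    specialize (HDp x hx1). unfold Dd; lra.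
    specialize (HDm x hx1). unfold Dd; lra.
Qed.


Lemma cont_eps f x0 : continuity_pt f x0 -> forall e, 0 < e ->
  exists d, 0 < d /\ forall x, Rabs (x - x0) < d -> Rabs (f x - f x0) < e.
Proof.
  intros Hc e he. apply continuity_pt_filterlim in Hc.
  apply filterlim_locally with (eps := mkposreal e he) in Hc.
  destruct Hc as [d Hd]. exists d. split. apply cond_pos.
  intros x hx. exact (Hd x hx).
Qed.

Lemma nat_big A : exists N : nat, A < INR N.
Proof. destruct (INR_archimed 1 A ltac:(lra)) as [n hn]. exists n. lra. Qed.

Lemma superlin a b A del M p : 0 < del -> 0 <= A -> del <= a -> 0 <= b <= A ->
  (Rabs M + A + 1) / del + 1 < p ->
  M * p < a * (exp (2 * p) - 1) + b * (exp (- (2 * p)) - 1).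
Proof.
  intros hd hA ha hb hp.
  assert (hp1 : 1 < p). { assert (0 <= (Rabs M + A + 1) / del) by (apply Rdiv_le_0_compat; [pose proof (Rabs_pos M)|]; lra). lra. }
  assert (hdp : Rabs M + A + 1 < del * p).
  { assert ((Rabs M + A + 1) / del < p - 1) by lra.
    apply (Rmult_lt_compat_l del) in H; [|lra]. unfold Rdiv in H.
    rewrite <- Rmult_assoc, (Rmult_comm del), Rmult_assoc, Rinv_r, Rmult_1_r in H by lra. nra. }
  assert (he : (1 + p) * (1 + p) <= exp (2 * p)).
  { replace (2 * p) with (p + p) by ring. rewrite exp_plus. pose proof (exp_ineq1_le p). nra. }
  pose proof (exp_pos (- (2 * p))).
  assert (b * (exp (- (2 * p)) - 1) >= - A) by nra.
  assert (a * (exp (2 * p) - 1) >= del * (2 * p + p * p)) by nra.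
  pose proof (Rle_abs M). nra.
Qed.

Lemma superlin_neg a b A del M p : 0 < del -> 0 <= A -> del <= b -> 0 <= a <= A ->
  (Rabs M + A + 1) / del + 1 < - p ->
  M * (- p) < a * (exp (2 * p) - 1) + b * (exp (- (2 * p)) - 1).
Proof.
  intros hd hA hb ha hp.
  pose proof (superlin b a A del M (- p) hd hA hb ha hp).
  replace (- (2 * - p)) with (2 * p) in H by ring. replace (2 * - p) with (- (2 * p)) in H by ring. lra.
Qed.

Lemma argmin_char a b : 0 < a -> 0 < b ->
  let f q := a * (exp (2 * q) - 1) + b * (exp (- (2 * q)) - 1) in
  (forall q, f (ln (b / a) / 4) <= f q) /\
  (forall p, (forall q, f p <= f q) -> p = ln (b / a) / 4).
Proof.
  intros ha hb f.
  set (p0 := ln (b / a) / 4).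
  assert (E : a * exp (2 * p0) = b * exp (- (2 * p0))).
  { assert (exp (2 * p0) * exp (2 * p0) = b / a).
    { rewrite <- exp_plus. replace (2 * p0 + 2 * p0) with (ln (b / a)) by (unfold p0; field).
      apply exp_ln. apply Rdiv_lt_0_compat; auto. }
    rewrite exp_Ropp. apply (Rmult_eq_reg_r (exp (2 * p0))); [|pose proof (exp_pos (2*p0)); lra].
    rewrite Rmult_assoc, H, Rmult_assoc, Rinv_l by (pose proof (exp_pos (2*p0)); lra). field. lra. }
  assert (key : forall q, q <> p0 -> f p0 < f q).
  { intros q hq. unfold f.
    assert (F1 : exp (2*q) = exp (2*p0) * exp (2*(q-p0))) by (rewrite <- exp_plus; f_equal; ring).
    assert (F2 : exp (-(2*q)) = exp (-(2*p0)) * exp (-(2*(q-p0)))) by (rewrite <- exp_plus; f_equal; ring).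
    pose proof (exp_ineq1 (2*(q-p0)) ltac:(intro; apply hq; lra)).
    pose proof (exp_ineq1 (-(2*(q-p0))) ltac:(intro; apply hq; lra)).
    rewrite F1, F2.
    pose proof (exp_pos (2*p0)). pose proof (exp_pos (-(2*p0))).
    assert (a * exp (2 * p0) * exp (2 * (q - p0)) > a * exp (2*p0) * (1 + 2 * (q - p0))) by (apply Rmult_gt_compat_l; nra).
    assert (b * exp (-(2 * p0)) * exp (-(2 * (q - p0))) > b * exp (-(2*p0)) * (1 + -(2 * (q - p0)))) by (apply Rmult_gt_compat_l; nra).
    nra. }
  split.
  - intros q. destruct (Req_dec q p0) as [->|h]. lra. left; apply key; auto.
  - intros p Hp. destruct (Req_dec p p0) as [|h]; auto. specialize (key p h). specialize (Hp p0). lra.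
Qed.

Lemma part_H3K (vp vm gp gm : R -> R)
  (hvm_pos : forall x, -1 <= x <= 1 -> x <> -1 -> 0 < vm x)
  (hvp_pos : forall x, -1 <= x <= 1 -> x <> 1 -> 0 < vp x)
  (eqp : forall x, -1 <= x <= 1 -> gp x = vp x)
  (eqm : forall x, -1 <= x <= 1 -> gm x = vm x)
  (cont : forall x, -1 <= x <= 1 -> continuity_pt gp x /\ continuity_pt gm x) :
    (forall K : R -> Prop, compact K -> subset_open_interval K ->
      forall M, exists R0, 0 < R0 /\ forall p, R0 < Rabs p ->
        forall x, K x -> M < Hex vp vm x p / Rabs p).
Proof.
  intros K HK Hsub M.
  destruct (compact_in_interval K HK Hsub) as [c [d [hc [hcd [hd Hcd]]]]].
  destruct (cont_pos_bound gp c d hcd) as [dp0 [hdp Hdp]].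
  { intros; apply cont; lra. }
  { intros y hy. rewrite eqp by lra. apply hvp_pos; lra. }
  destruct (cont_pos_bound gm c d hcd) as [dm0 [hdm Hdm]].
  { intros; apply cont; lra. }
  { intros y hy. rewrite eqm by lra. apply hvm_pos; lra. }
  destruct (cont_abs_bound gp (-1) 1 ltac:(lra)) as [Bp [hBp HBp]]. { intros; apply cont; lra. }
  destruct (cont_abs_bound gm (-1) 1 ltac:(lra)) as [Bm [hBm HBm]]. { intros; apply cont; lra. }
  set (del := Rmin dp0 dm0). set (A := Bp + Bm).
  assert (hdel : 0 < del) by (apply Rmin_pos; auto).
  assert (hdel1 : del <= dp0) by apply Rmin_l. assert (hdel2 : del <= dm0) by apply Rmin_r.
  exists ((Rabs M + A + 1) / del + 1). split.
  { assert (0 <= (Rabs M + A + 1) / del) by (apply Rdiv_le_0_compat; [pose proof (Rabs_pos M); unfold A|]; lra). lra. }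
  intros p hp x Kx.
  pose proof (Hcd x Kx) as hx. pose proof (Hsub x Kx) as hx'.
  assert (hx1 : -1 <= x <= 1) by lra.
  assert (ha : del <= vp x <= A).
  { rewrite <- eqp by lra. split. specialize (Hdp x hx); lra.
    specialize (HBp x hx1). pose proof (Rle_abs (gp x)). unfold A; lra. }
  assert (hb : del <= vm x <= A).
  { rewrite <- eqm by lra. split. specialize (Hdm x hx); lra.
    specialize (HBm x hx1). pose proof (Rle_abs (gm x)). unfold A; lra. }
  assert (hA : 0 <= A) by (unfold A; lra).
  assert (hpos : 0 < Rabs p).
  { assert (0 <= (Rabs M + A + 1) / del) by (apply Rdiv_le_0_compat; [pose proof (Rabs_pos M)|]; lra). lra. }
  apply (Rmult_lt_reg_r (Rabs p)); auto. unfold Rdiv. rewrite Rmult_assoc, Rinv_l, Rmult_1_r by lra.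
  unfold Hex. destruct (Rcase_abs p) as [hn|hn].
  - rewrite (Rabs_left p) in * by lra. apply superlin_neg with A del; lra.
  - rewrite (Rabs_right p) in * by lra. apply superlin with A del; lra.
Qed.

Lemma part_H3m (vp vm : R -> R) (hvm0 : vm (-1) = 0) (hvp : 0 < vp (-1)) :
  forall M, exists R0, 0 < R0 /\ forall p, R0 < p -> M < Hex vp vm (-1) p / p.
Proof.
  intros M. set (a := vp (-1)) in *.
  exists ((Rabs M + a + 1) / a + 1). split.
  { assert (0 <= (Rabs M + a + 1) / a) by (apply Rdiv_le_0_compat; [pose proof (Rabs_pos M)|]; lra). lra. }
  intros p hp.
  assert (0 <= (Rabs M + a + 1) / a) by (apply Rdiv_le_0_compat; [pose proof (Rabs_pos M)|]; lra).
  apply (Rmult_lt_reg_r p); [lra|]. unfold Rdiv. rewrite Rmult_assoc, Rinv_l, Rmult_1_r by lra.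
  unfold Hex. rewrite hvm0. apply superlin with a a; try lra. unfold a; lra.
Qed.

Lemma part_H3p (vp vm : R -> R) (hvp0 : vp 1 = 0) (hvm : 0 < vm 1) :
  forall M, exists R0, 0 < R0 /\ forall p, p < - R0 -> M < Hex vp vm 1 p / (- p).
Proof.
  intros M. set (b := vm 1) in *.
  exists ((Rabs M + b + 1) / b + 1). split.
  { assert (0 <= (Rabs M + b + 1) / b) by (apply Rdiv_le_0_compat; [pose proof (Rabs_pos M)|]; lra). lra. }
  intros p hp.
  assert (0 <= (Rabs M + b + 1) / b) by (apply Rdiv_le_0_compat; [pose proof (Rabs_pos M)|]; lra).
  apply (Rmult_lt_reg_r (- p)); [lra|]. unfold Rdiv. rewrite Rmult_assoc, Rinv_l, Rmult_1_r by lra.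
  unfold Hex. rewrite hvp0. apply superlin_neg with b b; try lra; unfold b; lra.
Qed.

Lemma part_H4m (vp vm gp gm : R -> R)
  (hvm_pos : forall x, -1 <= x <= 1 -> x <> -1 -> 0 < vm x)
  (hvp_pos : forall x, -1 <= x <= 1 -> x <> 1 -> 0 < vp x)
  (hvm0 : vm (-1) = 0)
  (eqp : forall x, -1 <= x <= 1 -> gp x = vp x)
  (eqm : forall x, -1 <= x <= 1 -> gm x = vm x)
  (cp : continuity_pt gp (-1)) (cm : continuity_pt gm (-1)) :
  forall M, exists d, 0 < d /\ forall x, -1 < x < 1 -> x < -1 + d ->
        (exists p, is_argmin (Hex vp vm) x p) /\ (forall p, is_argmin (Hex vp vm) x p -> p < - M).
Proof.
  intros M.
  assert (ha0 : 0 < gp (-1)) by (rewrite eqp by lra; apply hvp_pos; lra).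
  assert (hb0 : gm (-1) = 0) by (rewrite eqm by lra; auto).
  set (a0 := gp (-1)) in *.
  pose proof (exp_pos (- (4 * M))) as hE.
  destruct (cont_eps gp (-1) cp (a0/2) ltac:(lra)) as [d1 [hd1 Hd1]].
  destruct (cont_eps gm (-1) cm (a0/2 * exp (- (4 * M))) ltac:(nra)) as [d2 [hd2 Hd2]].
  exists (Rmin d1 d2). split. apply Rmin_pos; auto.
  intros x hx hxd. pose proof (Rmin_l d1 d2). pose proof (Rmin_r d1 d2).
  assert (hxx : Rabs (x - -1) < d1 /\ Rabs (x - -1) < d2) by (rewrite Rabs_right; lra).
  destruct hxx as [hx1 hx2].
  specialize (Hd1 x hx1). specialize (Hd2 x hx2). fold a0 in Hd1. rewrite hb0 in Hd2.
  apply Rabs_def2 in Hd1. apply Rabs_def2 in Hd2.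
  rewrite eqp in Hd1 by lra. rewrite eqm in Hd2 by lra.
  assert (ha : 0 < vp x) by (apply hvp_pos; lra). assert (hb : 0 < vm x) by (apply hvm_pos; lra).
  destruct (argmin_char (vp x) (vm x) ha hb) as [H1 H2].
  split.
  - exists (ln (vm x / vp x) / 4). intros q. apply H1.
  - intros p Hp. rewrite (H2 p Hp).
    assert (hr : vm x / vp x < exp (- (4 * M))).
    { apply (Rmult_lt_reg_r (vp x)); auto. unfold Rdiv. rewrite Rmult_assoc, Rinv_l, Rmult_1_r by lra. nra. }
    apply ln_increasing in hr; [|apply Rdiv_lt_0_compat; auto].
    rewrite ln_exp in hr. lra.
Qed.

Lemma part_H4p (vp vm gp gm : R -> R)
  (hvm_pos : forall x, -1 <= x <= 1 -> x <> -1 -> 0 < vm x)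
  (hvp_pos : forall x, -1 <= x <= 1 -> x <> 1 -> 0 < vp x)
  (hvp0 : vp 1 = 0)
  (eqp : forall x, -1 <= x <= 1 -> gp x = vp x)
  (eqm : forall x, -1 <= x <= 1 -> gm x = vm x)
  (cp : continuity_pt gp 1) (cm : continuity_pt gm 1) :
  forall M, exists d, 0 < d /\ forall x, -1 < x < 1 -> 1 - d < x ->
        (exists p, is_argmin (Hex vp vm) x p) /\ (forall p, is_argmin (Hex vp vm) x p -> M < p).
Proof.
  intros M.
  assert (hb0 : 0 < gm 1) by (rewrite eqm by lra; apply hvm_pos; lra).
  assert (ha0 : gp 1 = 0) by (rewrite eqp by lra; auto).
  set (b0 := gm 1) in *.
  pose proof (exp_pos (- (4 * M))) as hE.
  destruct (cont_eps gm 1 cm (b0/2) ltac:(lra)) as [d1 [hd1 Hd1]].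
  destruct (cont_eps gp 1 cp (b0/2 * exp (- (4 * M))) ltac:(nra)) as [d2 [hd2 Hd2]].
  exists (Rmin d1 d2). split. apply Rmin_pos; auto.
  intros x hx hxd. pose proof (Rmin_l d1 d2). pose proof (Rmin_r d1 d2).
  assert (hxx : Rabs (x - 1) < d1 /\ Rabs (x - 1) < d2) by (rewrite Rabs_left; lra).
  destruct hxx as [hx1 hx2].
  specialize (Hd1 x hx1). specialize (Hd2 x hx2). fold b0 in Hd1. rewrite ha0 in Hd2.
  apply Rabs_def2 in Hd1. apply Rabs_def2 in Hd2.
  rewrite eqm in Hd1 by lra. rewrite eqp in Hd2 by lra.
  assert (ha : 0 < vp x) by (apply hvp_pos; lra). assert (hb : 0 < vm x) by (apply hvm_pos; lra).
  destruct (argmin_char (vp x) (vm x) ha hb) as [H1 H2].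
  split.
  - exists (ln (vm x / vp x) / 4). intros q. apply H1.
  - intros p Hp. rewrite (H2 p Hp).
    assert (hEE : exp (- (4 * M)) * exp (4 * M) = 1) by (rewrite <- exp_plus; replace (- (4 * M) + 4 * M) with 0 by ring; apply exp_0).
    pose proof (exp_pos (4 * M)).
    assert (hr : exp (4 * M) < vm x / vp x).
    { apply (Rmult_lt_reg_r (vp x)); auto. unfold Rdiv. rewrite Rmult_assoc, Rinv_l, Rmult_1_r by lra.
      assert (HH : vp x * exp (4 * M) < b0 / 2 * exp (- (4 * M)) * exp (4 * M)) by (apply Rmult_lt_compat_r; lra).
      rewrite Rmult_assoc, hEE in HH. nra. }
    apply ln_increasing in hr; [|apply exp_pos].
    rewrite ln_exp in hr. lra.
Qed.

Lemma yseq_lim eta : 0 < eta -> Un_cv (fun n => eta / (INR n + 2)) 0.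
Proof.
  intros he eps heps. destruct (nat_big (eta / eps)) as [N hN].
  exists N. intros n hn. unfold R_dist.
  apply le_INR in hn. pose proof (pos_INR N).
  assert (hp : 0 < INR n + 2) by lra.
  rewrite Rminus_0_r, Rabs_right by (apply Rle_ge, Rdiv_le_0_compat; lra).
  assert (eta / eps * eps = eta) by (field; lra).
  apply (Rmult_lt_reg_r (INR n + 2)); auto. unfold Rdiv at 1. rewrite Rmult_assoc, Rinv_l, Rmult_1_r by lra.
  nra.
Qed.

Lemma part_H5p (vp vm gp gm gp1 gm1 : R -> R)
  (hvm_nonneg : forall x, -1 <= x <= 1 -> 0 <= vm x)
  (hvp_pos : forall x, -1 <= x <= 1 -> x <> 1 -> 0 < vp x)
  (eqp : forall x, -1 <= x <= 1 -> gp x = vp x)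
  (eqm : forall x, -1 <= x <= 1 -> gm x = vm x)
  (c1 : continuity_pt gp1 1) (hp1 : gp1 1 < 0)
  (cm1 : forall x, -1 <= x <= 1 -> continuity_pt gm1 x) :
  exists yp qp : nat -> R,
        (forall n, -1 < yp n < 1 /\ 0 < qp n) /\
        Un_cv yp 1 /\ cv_infty qp /\
        (forall n q, qp n <= q -> 0 <= gp (yp n) * (2 * exp (2 * q)) + gm (yp n) * (-2 * exp (- (2 * q)))) /\
        (forall n y, yp n <= y <= 1 -> 0 <= - (gp1 y * (exp (2 * qp n) - 1) + gm1 y * (exp (- (2 * qp n)) - 1))).
Proof.
  set (c := - gp1 1 / 2). assert (hc : 0 < c) by (unfold c; lra).
  destruct (cont_eps gp1 1 c1 c hc) as [eta0 [he0 He0]].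
  destruct (cont_abs_bound gm1 (-1) 1 ltac:(lra) cm1) as [B [hB HB]].
  set (eta := Rmin eta0 1). assert (he : 0 < eta) by (apply Rmin_pos; lra).
  assert (he1 : eta <= eta0) by apply Rmin_l. assert (he2 : eta <= 1) by apply Rmin_r.
  set (Q0 := B / c + 1). assert (hQ0 : 1 <= Q0) by (unfold Q0; assert (0 <= B / c) by (apply Rdiv_le_0_compat; lra); lra).
  set (yp := fun n => 1 - eta / (INR n + 2)).
  assert (hy : forall n, 0 < eta / (INR n + 2) <= eta / 2 /\ -1 < yp n < 1).
  { intros n. pose proof (pos_INR n). assert (0 < eta / (INR n + 2)) by (apply Rdiv_lt_0_compat; lra).
    assert (eta / (INR n + 2) <= eta / 2) by (unfold Rdiv; apply Rmult_le_compat_l; [lra|apply Rinv_le_contravar; lra]).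
    unfold yp. lra. }
  set (qp := fun n => INR n + Q0 + gm (yp n) / gp (yp n)).
  assert (hr : forall n, 0 < gp (yp n) /\ 0 <= gm (yp n) / gp (yp n)).
  { intros n. destruct (hy n) as [_ h]. rewrite eqp, eqm by lra.
    assert (0 < vp (yp n)) by (apply hvp_pos; lra). split; auto.
    apply Rdiv_le_0_compat; auto. apply hvm_nonneg; lra. }
  exists yp, qp.
  split; [|split; [|split; [|split]]].
  - intros n. split. apply hy. unfold qp. pose proof (pos_INR n). pose proof (hr n). lra.
  - intros eps heps. destruct (yseq_lim eta he eps heps) as [N HN]. exists N. intros n hn.
    specialize (HN n hn). unfold R_dist in *. unfold yp.
    replace (1 - eta / (INR n + 2) - 1) with (- (eta / (INR n + 2) - 0)) by ring. rewrite Rabs_Ropp. exact HN.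
  - intros M. destruct (nat_big M) as [N hN]. exists N. intros n hn. apply le_INR in hn.
    unfold qp. pose proof (hr n). lra.
  - intros n q hq. unfold qp in hq. destruct (hr n) as [hg hrat]. set (y := yp n) in *.
    assert (hq' : gm y / gp y <= q) by (pose proof (pos_INR n); lra).
    pose proof (exp_ineq1_le (4 * q)).
    assert (hm : gm y <= gp y * exp (4 * q)).
    { assert (gm y = gp y * (gm y / gp y)) by (field; lra). rewrite H0 at 1.
      apply Rmult_le_compat_l; lra. }
    assert (E : exp (2 * q) = exp (4 * q) * exp (- (2 * q))) by (rewrite <- exp_plus; f_equal; ring).
    rewrite E. pose proof (exp_pos (- (2 * q))). nra.
  - intros n y hyn. destruct (hy n) as [[h1 h2] h3].
    assert (hy1 : Rabs (y - 1) < eta0).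
    { unfold yp in hyn. rewrite Rabs_left1 by lra. lra. }
    specialize (He0 y hy1). apply Rabs_def2 in He0.
    assert (hgy : gp1 y < - c) by (unfold c in *; lra).
    assert (hyB : Rabs (gm1 y) <= B) by (apply HB; unfold yp in hyn; lra).
    set (q := qp n).
    assert (hq : Q0 <= q) by (unfold q, qp; pose proof (pos_INR n); pose proof (hr n); lra).
    pose proof (exp_ineq1_le (2 * q)). pose proof (exp_pos (- (2 * q))).
    assert (exp (- (2 * q)) <= 1) by (rewrite <- exp_0; left; apply exp_increasing; lra).
    assert (hgm : gm1 y * (exp (- (2 * q)) - 1) <= B).
    { pose proof (Rle_abs (- gm1 y)). rewrite Rabs_Ropp in *.
      assert (0 <= (B + gm1 y) * (1 - exp (- (2 * q)))) by (apply Rmult_le_pos; lra).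
      nra. }
    assert (hcQ : c * Q0 = B + c) by (unfold Q0; field; lra).
    assert (gp1 y * (exp (2 * q) - 1) <= - c * (exp (2 * q) - 1)) by (apply Rmult_le_compat_r; lra).
    assert (c * (2 * q) <= c * (exp (2 * q) - 1)) by (apply Rmult_le_compat_l; lra).
    assert (c * Q0 <= c * q) by (apply Rmult_le_compat_l; lra).
    lra.
Qed.

Lemma part_H5m (vp vm gp gm gp1 gm1 : R -> R)
  (hvp_nonneg : forall x, -1 <= x <= 1 -> 0 <= vp x)
  (hvm_pos : forall x, -1 <= x <= 1 -> x <> -1 -> 0 < vm x)
  (eqp : forall x, -1 <= x <= 1 -> gp x = vp x)
  (eqm : forall x, -1 <= x <= 1 -> gm x = vm x)
  (c1 : continuity_pt gm1 (-1)) (hm1 : 0 < gm1 (-1))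
  (cp1 : forall x, -1 <= x <= 1 -> continuity_pt gp1 x) :
  exists ym qm : nat -> R,
        (forall n, -1 < ym n < 1 /\ qm n < 0) /\
        Un_cv ym (-1) /\ cv_infty (fun n => - qm n) /\
        (forall n q, q <= qm n -> gp (ym n) * (2 * exp (2 * q)) + gm (ym n) * (-2 * exp (- (2 * q))) <= 0) /\
        (forall n y, -1 <= y <= ym n -> - (gp1 y * (exp (2 * qm n) - 1) + gm1 y * (exp (- (2 * qm n)) - 1)) <= 0).
Proof.
  set (c := gm1 (-1) / 2). assert (hc : 0 < c) by (unfold c; lra).
  destruct (cont_eps gm1 (-1) c1 c hc) as [eta0 [he0 He0]].
  destruct (cont_abs_bound gp1 (-1) 1 ltac:(lra) cp1) as [B [hB HB]].
  set (eta := Rmin eta0 1). assert (he : 0 < eta) by (apply Rmin_pos; lra).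
  assert (he1 : eta <= eta0) by apply Rmin_l. assert (he2 : eta <= 1) by apply Rmin_r.
  set (Q0 := B / c + 1). assert (hQ0 : 1 <= Q0) by (unfold Q0; assert (0 <= B / c) by (apply Rdiv_le_0_compat; lra); lra).
  set (ym := fun n => -1 + eta / (INR n + 2)).
  assert (hy : forall n, 0 < eta / (INR n + 2) <= eta / 2 /\ -1 < ym n < 1).
  { intros n. pose proof (pos_INR n). assert (0 < eta / (INR n + 2)) by (apply Rdiv_lt_0_compat; lra).
    assert (eta / (INR n + 2) <= eta / 2) by (unfold Rdiv; apply Rmult_le_compat_l; [lra|apply Rinv_le_contravar; lra]).
    unfold ym. lra. }
  set (qm := fun n => - (INR n + Q0 + gp (ym n) / gm (ym n))).
  assert (hr : forall n, 0 < gm (ym n) /\ 0 <= gp (ym n) / gm (ym n)).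
  { intros n. destruct (hy n) as [_ h]. rewrite eqp, eqm by lra.
    assert (0 < vm (ym n)) by (apply hvm_pos; lra). split; auto.
    apply Rdiv_le_0_compat; auto. apply hvp_nonneg; lra. }
  exists ym, qm.
  split; [|split; [|split; [|split]]].
  - intros n. split. apply hy. unfold qm. pose proof (pos_INR n). pose proof (hr n). lra.
  - intros eps heps. destruct (yseq_lim eta he eps heps) as [N HN]. exists N. intros n hn.
    specialize (HN n hn). unfold R_dist in *. unfold ym.
    replace (-1 + eta / (INR n + 2) - -1) with (eta / (INR n + 2) - 0) by ring. exact HN.
  - intros M. destruct (nat_big M) as [N hN]. exists N. intros n hn. apply le_INR in hn.
    unfold qm. pose proof (hr n). lra.
  - intros n q hq. unfold qm in hq. destruct (hr n) as [hg hrat]. set (y := ym n) in *.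
    set (t := - q).
    assert (hq' : gp y / gm y <= t) by (unfold t; pose proof (pos_INR n); lra).
    pose proof (exp_ineq1_le (4 * t)).
    assert (hm : gp y <= gm y * exp (4 * t)).
    { assert (gp y = gm y * (gp y / gm y)) by (field; lra). rewrite H0 at 1.
      apply Rmult_le_compat_l; lra. }
    assert (E : exp (- (2 * q)) = exp (4 * t) * exp (2 * q)) by (rewrite <- exp_plus; f_equal; unfold t; ring).
    rewrite E. pose proof (exp_pos (2 * q)). nra.
  - intros n y hyn. destruct (hy n) as [[h1 h2] h3].
    assert (hy1 : Rabs (y - -1) < eta0).
    { unfold ym in hyn. rewrite Rabs_right by lra. lra. }
    specialize (He0 y hy1). apply Rabs_def2 in He0.
    assert (hgy : c < gm1 y) by (unfold c in *; lra).
    assert (hyB : Rabs (gp1 y) <= B) by (apply HB; unfold ym in hyn; lra).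
    set (q := - qm n).
    assert (hq : Q0 <= q) by (unfold q, qm; pose proof (pos_INR n); pose proof (hr n); lra).
    replace (qm n) with (- q) by (unfold q; ring).
    replace (- (2 * - q)) with (2 * q) by ring.
    pose proof (exp_ineq1_le (2 * q)). pose proof (exp_pos (2 * - q)).
    assert (exp (2 * - q) <= 1) by (rewrite <- exp_0; left; apply exp_increasing; lra).
    assert (hgm : - B <= gp1 y * (exp (2 * - q) - 1)).
    { pose proof (Rle_abs (gp1 y)).
      assert (0 <= (B - gp1 y) * (1 - exp (2 * - q))) by (apply Rmult_le_pos; lra).
      nra. }
    assert (hcQ : c * Q0 = B + c) by (unfold Q0; field; lra).
    assert (c * (exp (2 * q) - 1) <= gm1 y * (exp (2 * q) - 1)) by (apply Rmult_le_compat_r; lra).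
    assert (c * (2 * q) <= c * (exp (2 * q) - 1)) by (apply Rmult_le_compat_l; lra).
    assert (c * Q0 <= c * q) by (apply Rmult_le_compat_l; lra).
    lra.
Qed.


Theorem lemmaA1 (vp vm : R -> R)
  (hvp_nonneg : forall x, -1 <= x <= 1 -> 0 <= vp x)
  (hvm_nonneg : forall x, -1 <= x <= 1 -> 0 <= vm x)
  (hvm0 : vm (-1) = 0)
  (hvm_pos : forall x, -1 <= x <= 1 -> x <> -1 -> 0 < vm x)
  (hvp0 : vp 1 = 0)
  (hvp_pos : forall x, -1 <= x <= 1 -> x <> 1 -> 0 < vp x)
  (hvp_C2 : exists (U : R -> Prop) (g g1 g2 : R -> R),
      open_set U /\ (forall x, -1 <= x <= 1 -> U x) /\
      (forall x, -1 <= x <= 1 -> g x = vp x) /\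
      C2_on1 U g g1 g2 /\ g1 1 < 0)
  (hvm_C2 : exists (U : R -> Prop) (g g1 g2 : R -> R),
      open_set U /\ (forall x, -1 <= x <= 1 -> U x) /\
      (forall x, -1 <= x <= 1 -> g x = vm x) /\
      C2_on1 U g g1 g2 /\ 0 < g1 (-1)) :
  ConditionH (Hex vp vm).
Proof.
  destruct hvp_C2 as [Up [gp [gp1 [gp2 [oUp [inUp [eqp [C2p hp1]]]]]]]].
  destruct hvm_C2 as [Um [gm [gm1 [gm2 [oUm [inUm [eqm [C2m hm1]]]]]]]].
  destruct (open_strip Up oUp inUp) as [ep [hep Hep]].
  destruct (open_strip Um oUm inUm) as [em [hem Hem]].
  set (eps := Rmin ep em).
  assert (heps : 0 < eps) by (apply Rmin_pos; auto).
  assert (Hstrip : forall x, -1 - eps < x < 1 + eps -> Up x /\ Um x).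
  { intros x hx. pose proof (Rmin_l ep em). pose proof (Rmin_r ep em). fold eps in H, H0.
    split; [apply Hep|apply Hem]; lra. }
  assert (cp : forall x, -1 <= x <= 1 -> continuity_pt gp x /\ continuity_pt gp1 x /\ continuity_pt gp2 x)
    by (intros; apply (C2_on1_facts Up); auto).
  assert (cm : forall x, -1 <= x <= 1 -> continuity_pt gm x /\ continuity_pt gm1 x /\ continuity_pt gm2 x)
    by (intros; apply (C2_on1_facts Um); auto).
  assert (dp : forall x, -1 <= x <= 1 -> derivable_pt_lim gp x (gp1 x)) by (intros; apply C2p; auto).
  assert (dm : forall x, -1 <= x <= 1 -> derivable_pt_lim gm x (gm1 x)) by (intros; apply C2m; auto).
  split.
  { intros x _. unfold Hex. rewrite Rmult_0_r, Ropp_0, exp_0. ring. }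
  exists eps,
    (fun x p => gp x * (exp (2 * p) - 1) + gm x * (exp (- (2 * p)) - 1)),
    (fun x p => gp1 x * (exp (2 * p) - 1) + gm1 x * (exp (- (2 * p)) - 1)),
    (fun x p => gp x * (2 * exp (2 * p)) + gm x * (-2 * exp (- (2 * p)))),
    (fun x p => gp2 x * (exp (2 * p) - 1) + gm2 x * (exp (- (2 * p)) - 1)),
    (fun x p => gp1 x * (2 * exp (2 * p)) + gm1 x * (-2 * exp (- (2 * p)))),
    (fun x p => gp1 x * (2 * exp (2 * p)) + gm1 x * (-2 * exp (- (2 * p)))),
    (fun x p => gp x * (4 * exp (2 * p)) + gm x * (4 * exp (- (2 * p)))).
  split; [exact heps|].
  split.
  {
    split.
    - intros x p hx. destruct (Hstrip x hx) as [ux vx].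
      destruct (C2p x ux) as [a1 [a2 _]]. destruct (C2m x vx) as [b1 [b2 _]].
      split; [apply D1; auto|].
      split; [apply D2; [apply de1|apply de2]|].
      split; [apply D1; auto|].
      split; [apply D2; [apply de1|apply de2]|].
      split; [apply D1; auto|].
      apply D2; [apply de1'|apply de2'].
    - assert (Cs : forall x, -1 - eps < x < 1 + eps ->
         (continuity_pt gp x /\ continuity_pt gm x) /\ (continuity_pt gp1 x /\ continuity_pt gm1 x)
         /\ (continuity_pt gp2 x /\ continuity_pt gm2 x)).
      { intros x hx. destruct (Hstrip x hx) as [ux vx].
        destruct (C2_on1_facts Up gp gp1 gp2 x C2p ux) as [? [? ?]].
        destruct (C2_on1_facts Um gm gm1 gm2 x C2m vx) as [? [? ?]]. tauto. }
      split; [apply (cont2_gen gp gm (fun q => exp (2*q) - 1) (fun q => exp (- (2*q)) - 1)); [intros; apply Cs; auto|intros; split; [apply ce1|apply ce2]]|].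
      split; [apply (cont2_gen gp1 gm1 (fun q => exp (2*q) - 1) (fun q => exp (- (2*q)) - 1)); [intros; apply Cs; auto|intros; split; [apply ce1|apply ce2]]|].
      split; [apply (cont2_gen gp gm (fun q => 2 * exp (2*q)) (fun q => -2 * exp (- (2*q)))); [intros; apply Cs; auto|intros; split; [apply ce1'|apply ce2']]|].
      split; [apply (cont2_gen gp2 gm2 (fun q => exp (2*q) - 1) (fun q => exp (- (2*q)) - 1)); [intros; apply Cs; auto|intros; split; [apply ce1|apply ce2]]|].
      split; [apply (cont2_gen gp1 gm1 (fun q => 2 * exp (2*q)) (fun q => -2 * exp (- (2*q)))); [intros; apply Cs; auto|intros; split; [apply ce1'|apply ce2']]|].
      split; [apply (cont2_gen gp1 gm1 (fun q => 2 * exp (2*q)) (fun q => -2 * exp (- (2*q)))); [intros; apply Cs; auto|intros; split; [apply ce1'|apply ce2']]|].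
      apply (cont2_gen gp gm (fun q => 4 * exp (2*q)) (fun q => 4 * exp (- (2*q)))); [intros; apply Cs; auto|intros; split; [apply ce1''|apply ce2'']]. }
  split.
  { intros x p hx. unfold Hex. rewrite eqp, eqm by auto. reflexivity. }
  split.
  { intros x p hx. rewrite eqp, eqm by auto.
    pose proof (exp_pos (2 * p)). pose proof (exp_pos (- (2 * p))).
    pose proof (hvp_nonneg x hx). pose proof (hvm_nonneg x hx).
    destruct (Req_dec x 1) as [->|hne].
    - pose proof (hvm_pos 1 ltac:(lra) ltac:(lra)). nra.
    - pose proof (hvp_pos x hx hne). nra. }
  assert (cont4 : forall x, -1 <= x <= 1 -> continuity_pt gp x /\ continuity_pt gm x /\
            continuity_pt gp1 x /\ continuity_pt gm1 x).
  { intros x hx. destruct (cp x hx) as [? [? ?]]. destruct (cm x hx) as [? [? ?]]. tauto. }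
  split.
  { exact (part_H2 vp vm gp gm gp1 gm1 hvm_pos hvp_pos eqp eqm cont4 dp dm). }
  split.
  { apply (part_H3K vp vm gp gm hvm_pos hvp_pos eqp eqm). intros x hx; split; apply cont4; auto. }
  split.
  { apply part_H3m; auto. apply hvp_pos; lra. }
  split.
  { apply part_H3p; auto. apply hvm_pos; lra. }
  split.
  { apply (part_H4m vp vm gp gm); auto; apply cont4; lra. }
  split.
  { apply (part_H4p vp vm gp gm); auto; apply cont4; lra. }
  split.
  { exact (part_H5p vp vm gp gm gp1 gm1 hvm_nonneg hvp_pos eqp eqm ltac:(apply cont4; lra) hp1
            ltac:(intros; apply cont4; auto)). }
  { exact (part_H5m vp vm gp gm gp1 gm1 hvp_nonneg hvm_pos eqp eqm ltac:(apply cont4; lra) hm1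
            ltac:(intros; apply cont4; auto)). }
Qed.
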